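(* There exists an invertible $25\times25$ binary matrix $A'$ such that the linear kernel $g({\bf u})={\bf u}A'$ has partial distance sequence $(1,2,2,2,2,2,4,4,4,4,4,4,4,8,8,8,8,8,8,8,12,12,12,16,16)$. Consequently $E_{25}\ge\frac1{25}\sum_{i=0}^{24}\log_{25}D_{min}^{(i)}\approx0.50608$.
   Context: A kernel of dimension $\ell$ is a bijection $g:\{0,1\}^\ell\to\{0,1\}^\ell$; a linear kernel is $g({\bf u})={\bf u}G$ over $\mathbb{F}_2$ for an invertible $\ell\times\ell$ binary matrix $G$. ${\bf a}\bullet{\bf b}$ denotes concatenation, $d_H$ Hamming distance. Partial distances: $D_{min}^{(i)}=\min\{d_H(g({\bf w}\bullet 0\bullet{\bf u}),g({\bf w}\bullet 1\bullet {\bf v})) : {\bf w}\in\{0,1\}^i,\ {\bf u},{\bf v}\in\{0,1\}^{\ell-i-1}\}$, $i=0,\dots,\ell-1$; exponent $E(g)=\frac1\ell\sum_{i}\log_\ell D_{min}^{(i)}$; $E_\ell=\max_g E(g)$ over all kernels of dimension $\ell$. *)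

(* Defs.v *)
From HB Require Import structures.
From mathcomp Require Import all_boot all_order all_algebra.
Set Implicit Arguments. Unset Strict Implicit. Unset Printing Implicit Defensive.
Import GRing.Theory.
Local Open Scope ring_scope.

Notation bvec l := 'rV['F_2]_l.

Definition dH (l : nat) (x y : bvec l) : nat := #|[set j : 'I_l | x 0 j != y 0 j]|.

Definition linker (l : nat) (G : 'M['F_2]_l) (u : bvec l) : bvec l := u *m G.

(* The pairs (w.0.u, w.1.v): x and y agree on the first i coordinates,
   x_i = 0 and y_i = 1. *)
Definition pd_pair (l : nat) (i : 'I_l) (x y : bvec l) : bool :=
  [forall j : 'I_l, ((j < i)%N ==> (x 0 j == y 0 j))] && (x 0 i == 0) && (y 0 i == 1).

(* partial distance D_min^(i) of a kernel g : minimum of d_H(g x, g y) over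
   such pairs (the set of pairs is nonempty, so the default l.+1 is never the
   value). *)
Definition pdist (l : nat) (g : bvec l -> bvec l) (i : 'I_l) : nat :=
  \big[minn/l.+1]_(p : bvec l * bvec l | pd_pair i p.1 p.2) dH (g p.1) (g p.2).

Definition seq25 : seq nat :=
  [:: 1; 2; 2; 2; 2; 2; 4; 4; 4; 4; 4; 4; 4; 8; 8; 8; 8; 8; 8; 8; 12; 12; 12; 16; 16]%N.

(* Main.v *)
Require Import Defs.
From HB Require Import structures.
From mathcomp Require Import all_boot all_order all_algebra.
Set Implicit Arguments. Unset Strict Implicit. Unset Printing Implicit Defensive.
Import GRing.Theory.
From mathcomp Require Import zify.

Definition tA : seq (seq bool) := [::
  [:: false; false; false; false; false; false; false; false; false; false; false; false; false; false; false; false; false; false; false; false; false; false; false; false; true];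
  [:: false; false; false; false; false; true; false; false; false; false; false; false; false; true; false; false; false; false; false; false; false; false; false; false; false];
  [:: false; false; false; false; false; false; false; false; false; false; false; false; false; false; false; false; true; false; false; false; false; false; false; false; true];
  [:: false; false; false; false; false; false; false; false; false; false; false; false; false; false; false; false; false; false; false; false; true; false; true; false; false];
  [:: true; false; false; false; false; false; false; false; false; false; false; true; false; false; false; false; false; false; false; false; false; false; false; false; false];
  [:: false; false; false; false; false; false; false; false; false; false; false; false; true; false; false; false; false; false; false; false; false; false; true; false; false];
  [:: true; false; false; false; false; false; false; false; false; false; false; true; false; false; true; false; false; false; true; false; false; false; false; false; false];
  [:: false; false; false; false; false; false; false; false; true; false; false; false; true; false; false; false; false; false; false; false; false; false; true; false; true];
  [:: true; false; false; true; false; false; false; false; false; true; false; false; false; false; false; false; false; false; false; false; false; true; false; false; false];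
  [:: false; false; true; false; false; false; false; false; false; false; true; false; false; false; false; false; true; false; false; false; true; false; false; false; false];
  [:: false; false; false; false; true; false; false; true; false; false; false; false; false; true; false; false; false; false; true; false; false; false; false; false; false];
  [:: false; true; false; false; false; false; true; false; false; false; false; false; false; false; false; false; true; false; false; false; false; true; false; false; false];
  [:: false; false; false; true; false; true; false; false; false; false; true; false; false; false; false; false; false; false; false; false; false; false; true; false; false];
  [:: false; false; false; true; true; false; true; false; true; false; false; false; false; true; true; false; false; false; true; false; false; true; false; false; false];
  [:: true; true; true; false; false; false; true; true; false; false; false; false; false; false; false; false; false; false; false; true; false; true; false; true; false];
  [:: false; false; false; false; false; false; false; false; true; false; false; true; false; false; false; false; false; true; true; true; true; false; true; true; false];
  [:: true; true; false; false; true; true; false; false; false; false; false; true; true; false; true; false; false; false; false; false; false; false; true; false; false];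
  [:: false; false; false; true; false; false; true; false; false; false; false; true; true; false; true; false; true; false; false; false; false; true; true; false; false];
  [:: false; false; false; false; false; false; true; false; false; false; false; true; false; true; true; false; true; true; true; true; false; false; false; false; false];
  [:: false; false; false; false; true; false; false; true; true; false; true; false; true; false; false; true; true; false; false; true; false; false; false; false; false];
  [:: true; true; true; false; false; true; false; false; true; false; false; false; true; false; true; true; true; false; false; false; true; false; true; true; false];
  [:: true; true; true; true; false; false; false; true; false; true; true; true; false; false; true; true; true; true; false; false; false; false; false; false; false];
  [:: false; true; true; false; false; false; false; false; true; true; true; false; true; true; true; false; false; true; false; true; false; true; true; false; false];
  [:: true; true; true; true; false; false; true; false; true; false; true; true; true; true; false; false; true; true; true; false; true; true; false; true; false];
  [:: false; false; true; true; true; true; false; true; true; true; false; false; false; true; true; true; true; true; true; true; false; false; true; true; false]].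
Definition tB : seq (seq bool) := [::
  [:: true; false; true; false; false; true; false; false; true; true; false; false; false; true; true; false; true; true; true; false; true; true; false; false; false];
  [:: true; true; false; false; true; false; true; true; true; true; false; false; false; false; true; false; false; false; true; false; true; true; false; false; false];
  [:: true; true; true; true; false; true; false; false; true; false; true; false; false; false; true; false; true; false; false; false; false; false; true; true; false];
  [:: true; false; true; true; false; true; true; false; true; false; false; true; true; true; false; false; false; true; false; false; false; true; true; true; true];
  [:: true; true; true; false; false; false; false; false; false; false; true; true; true; true; false; false; true; false; true; false; true; true; true; true; false];
  [:: true; true; true; true; false; false; true; false; false; true; true; true; false; true; true; false; true; true; false; false; false; true; false; false; true];
  [:: true; true; false; false; false; false; true; true; true; true; true; false; false; true; true; false; true; false; false; true; false; true; false; true; false];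
  [:: true; false; false; false; true; true; false; true; true; true; true; false; false; false; true; false; true; false; true; false; true; true; false; false; false];
  [:: true; false; false; false; false; true; false; true; false; false; false; false; false; false; false; false; false; false; false; false; false; false; false; false; false];
  [:: true; false; true; true; true; false; true; false; true; true; true; false; true; true; true; false; false; false; false; true; false; false; true; false; true];
  [:: true; false; true; true; true; true; false; false; false; false; false; true; false; false; true; false; true; false; false; true; true; false; false; false; false];
  [:: true; false; true; false; true; true; false; false; true; true; false; false; false; true; true; false; true; true; true; false; true; true; false; false; false];
  [:: true; true; true; true; true; true; false; false; true; true; true; true; false; false; false; false; false; false; false; true; true; false; true; true; false];
  [:: true; false; true; true; false; false; true; false; false; true; true; true; false; true; true; false; true; true; false; false; false; true; false; false; true];
  [:: true; true; false; true; false; true; false; true; true; false; false; false; true; false; false; false; true; true; false; false; false; true; true; true; true];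
  [:: true; true; true; false; false; true; false; false; true; false; true; true; false; false; false; true; true; true; true; false; false; true; false; true; false];
  [:: true; false; true; false; false; false; false; false; false; false; false; false; false; false; false; false; false; false; false; false; false; false; false; false; false];
  [:: true; false; false; true; true; false; true; true; true; true; false; true; true; false; true; true; true; true; true; false; true; false; false; false; true];
  [:: true; true; false; true; true; true; true; true; true; false; false; false; true; false; false; false; true; true; false; false; false; true; true; true; true];
  [:: true; true; true; false; true; true; false; false; true; false; false; false; true; true; false; true; false; true; true; true; false; true; false; true; false];
  [:: true; true; true; false; true; false; false; false; true; true; true; true; false; false; false; false; false; false; false; true; true; false; true; true; false];
  [:: true; false; true; false; true; false; false; false; false; false; true; true; false; true; false; false; true; false; true; true; true; false; false; true; false];
  [:: true; true; true; true; true; false; false; false; true; true; true; true; false; false; false; false; false; false; false; true; true; false; true; true; false];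
  [:: true; false; false; true; false; false; false; true; false; false; false; true; true; false; false; true; true; false; true; true; false; true; true; false; false];
  [:: true; false; false; false; false; false; false; false; false; false; false; false; false; false; false; false; false; false; false; false; false; false; false; false; false]].
Definition ent (t : seq (seq bool)) (i j : nat) : bool := nth false (nth [::] t i) j.
Definition xorl (s : seq bool) : bool := foldr xorb false s.
Definition cmul (z : seq bool) (t : seq (seq bool)) : seq bool :=
  mkseq (fun j => xorl (mkseq (fun k => nth false z k && ent t k j) 25)) 25.
Fixpoint lowseq (n w : nat) : seq (seq bool) :=
  match n with
  | 0 => [:: [::]]
  | n'.+1 => map (cons false) (lowseq n' w) ++
             (if w is w'.+1 then map (cons true) (lowseq n' w') else [::])
  end.
Definition tgt (i : nat) : nat := nth 0%N seq25 i.

Definition check_inv : bool :=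
  all (fun i => all (fun j => xorl (mkseq (fun k => ent tA i k && ent tB k j) 25) == (i == j)) (iota 0 25)) (iota 0 25).
Definition check_wit : bool :=
  all (fun i => count id (cmul (mkseq (fun k => k == i) 25) tA) == tgt i) (iota 0 25).
Definition check_lo : bool :=
  all (fun c => tgt (find id (cmul c tB)) <= count id c) (lowseq 25 3).
Definition check_hi : bool :=
  all (fun i => all (fun s => tgt i <= count id (cmul (nseq i false ++ true :: s) tA))
                    (lowseq (24 - i) (24 - i))) (iota 13 12).

Local Open Scope ring_scope.

Definition b2F (b : bool) : 'F_2 := if b then 1 else 0.
Definition mkM (t : seq (seq bool)) : 'M['F_2]_25 := \matrix_(i, j) b2F (ent t i j).
Definition zl (x : bvec 25) : seq bool := mkseq (fun k => x 0 (inord k) == 1) 25.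

Lemma F2c (a : 'F_2) : a = b2F (a == 1).
Proof. case: a => [[|[|m]] //= Hm]; apply/val_inj => //. Qed.

Lemma b2F_and a b : b2F (a && b) = b2F a * b2F b.
Proof. by case: a; case: b; rewrite /= ?mulr1 ?mulr0. Qed.

Lemma b2F_xor a b : b2F (xorb a b) = b2F a + b2F b.
Proof. case: a; case: b; rewrite /b2F /= ?addr0 ?add0r //. by apply/val_inj. Qed.

Lemma b2F_eq1 a : (b2F a == 1) = a.
Proof. by case: a. Qed.

Lemma F2_ne (a b : 'F_2) : (a != b) = (b - a == 1).
Proof. by case: a => [[|[|m]] Ha]; case: b => [[|[|n]] Hb]. Qed.

Lemma sum_b2F (F : 'I_25 -> bool) :
  \sum_(k < 25) b2F (F k) = b2F (xorl (mkseq (fun k => F (inord k)) 25)).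
Proof.
rewrite /xorl /mkseq foldrE big_map.
rewrite (big_morph b2F b2F_xor (erefl (0 : 'F_2) : b2F false = 0)).
rewrite [RHS](_ : _ = \sum_(0 <= i < 25) b2F (F (inord i))) // big_mkord.
by apply: eq_bigr => k _; rewrite inord_val.
Qed.

Lemma zl_mul (x : bvec 25) t : zl (x *m mkM t) = cmul (zl x) t.
Proof.
apply: (@eq_from_nth _ false); first by rewrite !size_mkseq.
move=> j; rewrite size_mkseq => hj.
rewrite /zl /cmul !nth_mkseq // !mxE.
under eq_bigr => k _ do rewrite mxE [x 0 k]F2c -b2F_and.
rewrite sum_b2F b2F_eq1; congr xorl.
rewrite /mkseq; apply/eq_in_map => k; rewrite mem_iota add0n => /andP [_ hk].
rewrite (nth_map 0%N) ?size_iota // nth_iota // add0n !inordK //.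
Qed.

Lemma size_zl x : size (zl x) = 25%N.
Proof. by rewrite size_mkseq. Qed.

Lemma nth_zl x (k : 'I_25) : nth false (zl x) k = (x 0 k == 1).
Proof. by rewrite nth_mkseq // inord_val. Qed.

Lemma dH_zl (u v : bvec 25) : dH u v = count id (zl (v - u)).
Proof.
rewrite /dH -sum1dep_card /zl /mkseq count_map -sum1_count.
rewrite [RHS](_ : _ = \sum_(0 <= i < 25 | ((v - u)%R ord0 (inord i) == 1%R)) 1)%N // big_mkord.
by apply: eq_bigl => k; rewrite inord_val !mxE -F2_ne.
Qed.

Lemma lowseq_mem (s : seq bool) n w : size s = n -> (count id s <= w)%N -> s \in lowseq n w.
Proof.
elim: s n w => [|b s IH] [|n] w //=.
case=> hs; rewrite mem_cat; case: b => /=.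
  case: w => // w hc; apply/orP; right; apply: map_f; exact: IH.
rewrite add0n => hc; apply/orP; left; apply: map_f; exact: IH.
Qed.

Lemma mkseq_inord (f : nat -> bool) : mkseq (fun k => f (inord k : 'I_25)) 25 = mkseq f 25.
Proof. by apply/eq_in_map => k; rewrite mem_iota add0n => /andP [_ hk]; rewrite inordK. Qed.

Lemma zl_struct (i : 'I_25) (x y : bvec 25) : pd_pair i x y ->
  zl (y - x) = nseq i false ++ true :: drop i.+1 (zl (y - x)).
Proof.
case/andP => /andP [/forallP H /eqP hx] /eqP hy.
have nz k (hk : (k < 25)%N) : nth false (zl (y - x)) k = (x 0 (Ordinal hk) != y 0 (Ordinal hk)).
  by have := nth_zl (y - x) (Ordinal hk); rewrite /= => ->; rewrite !mxE -F2_ne.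
have hi := ltn_ord i.
apply: (@eq_from_nth _ false).
  rewrite size_cat size_nseq (_ : size (true :: _) = (size (drop i.+1 (zl (y - x)))).+1) // size_drop size_zl; lia.
move=> k; rewrite size_zl => hk.
rewrite nth_cat size_nseq (nz k hk); case: (ltnP k i) => hki.
  rewrite nth_nseq hki; have := H (Ordinal hk); rewrite /= hki /= => /eqP ->.
  by rewrite eqxx.
case: (eqVneq k i) => [ek | nk].
  subst k; rewrite subnn /=; have -> : Ordinal hk = i by apply/val_inj.
  by rewrite hx hy.
have lik : (i < k)%N by rewrite ltn_neqAle eq_sym nk hki.
have -> : (k - i = (k - i.+1).+1)%N by lia.
rewrite (_ : nth false (true :: drop i.+1 (zl (y - x))) (k - i.+1).+1 = nth false (drop i.+1 (zl (y - x))) (k - i.+1)) // nth_drop subnKC // (nz k hk).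
Qed.

Lemma hAB : mkM tA *m mkM tB = 1%:M.
Proof.
apply/matrixP => i j; rewrite !mxE.
under eq_bigr => k _ do rewrite !mxE -b2F_and.
rewrite sum_b2F (mkseq_inord (fun k => ent tA i k && ent tB k j)).
have : check_inv by vm_compute.
move/allP/(_ i); rewrite mem_iota ltn_ord => /(_ isT).
move/allP/(_ j); rewrite mem_iota ltn_ord => /(_ isT) /eqP ->.
case: (eqVneq i j) => [->|ne]; first by rewrite !eqxx.
by rewrite (negbTE (ne : (i : nat) != j)).
Qed.

Lemma bigmin_le_seq (I : eqType) (r : seq I) (P : pred I) (F : I -> nat) m p0 :
  p0 \in r -> P p0 -> (\big[minn/m]_(p <- r | P p) F p <= F p0)%N.
Proof.
elim: r => // a r IH; rewrite inE big_cons; case/orP => [/eqP <- | h] hp.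
  by rewrite hp geq_minl.
case: (P a); last exact: IH h hp.
by apply: leq_trans (geq_minr _ _) _; exact: IH h hp.
Qed.

Theorem mainTheorem13 :
  exists A : 'M['F_2]_25,
    A \in unitmx /\
    forall i : 'I_25, pdist (linker A) i = nth 0%N seq25 i.
Proof.
exists (mkM tA); split; first by case: (mulmx1_unit hAB).
move=> i; rewrite -/(tgt i).
have hi := ltn_ord i.
have lower : forall x y : bvec 25, pd_pair i x y ->
    (tgt i <= dH (linker (mkM tA) x) (linker (mkM tA) y))%N.
  move=> x y hp; rewrite /linker dH_zl -mulmxBl zl_mul.
  have hz := zl_struct hp.
  case: (leqP 13 i) => h13.
    have : check_hi by vm_compute.
    move/allP/(_ i); rewrite mem_iota h13 => /(_ hi).
    move/allP/(_ (drop i.+1 (zl (y - x)))).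
    have hs : size (drop i.+1 (zl (y - x))) = (24 - i)%N by rewrite size_drop size_zl.
    have hc := count_size id (drop i.+1 (zl (y - x))); rewrite hs in hc.
    by rewrite -hz; apply; apply: lowseq_mem hs hc.
  have h4 : (tgt i <= 4)%N.
    have : all (fun k => tgt k <= 4)%N (iota 0 13) by vm_compute.
    by move/allP/(_ i); rewrite mem_iota /= => /(_ h13).
  case: (leqP 4 (count id (cmul (zl (y - x)) tA))) => hc; first exact: leq_trans h4 hc.
  have : check_lo by vm_compute.
  move/allP/(_ (cmul (zl (y - x)) tA)).
  have -> : cmul (cmul (zl (y - x)) tA) tB = zl (y - x).
    by rewrite -!zl_mul -mulmxA hAB mulmx1.
  have -> : find id (zl (y - x)) = i.
    by rewrite hz find_cat size_nseq has_nseq andbF /= addn0.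
  apply; apply: lowseq_mem; first by rewrite size_mkseq.
  by rewrite -ltnS.
set yw : bvec 25 := \row_j b2F (j == i).
have wp : pd_pair i 0 yw.
  apply/andP; split; [apply/andP; split|].
  - apply/forallP => j; apply/implyP => hj; rewrite !mxE.
    have ne : (j : nat) != i by rewrite neq_ltn hj.
    by rewrite (negbTE (ne : j != i)).
  - by rewrite !mxE.
  - by rewrite !mxE eqxx.
have wv : dH (linker (mkM tA) 0) (linker (mkM tA) yw) = tgt i.
  rewrite /linker dH_zl -mulmxBl subr0 zl_mul.
  have -> : zl yw = mkseq (fun k => k == i) 25.
    rewrite /zl; apply/eq_in_map => k; rewrite mem_iota add0n => /andP [_ hk].
    by rewrite mxE b2F_eq1 -val_eqE /= inordK.
  have : check_wit by vm_compute.
  by move/allP/(_ i); rewrite mem_iota hi => /(_ isT) /eqP.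
apply/eqP; rewrite eqn_leq; apply/andP; split.
  rewrite /pdist -wv.
  apply: (@bigmin_le_seq _ _ _ _ _ ((0 : bvec 25), yw)) => //.
  exact: mem_index_enum.
rewrite /pdist; apply: (big_ind (fun v => tgt i <= v)%N).
- have : all (fun k => tgt k <= 26)%N (iota 0 25) by vm_compute.
  by move/allP/(_ i); rewrite mem_iota /= => /(_ hi).
- by move=> a b ha hb; rewrite leq_min ha hb.
- by case=> x y /= hp; apply: lower.
Qed.
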